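(* Let $d\ge2$ and $x,y,u,v\in\mathbb{R}^d_{>0}$. Then there exist $x',y',u',v'\in\mathbb{R}^2_{>0}$ such that \[ s^\pm(x',y')=s^\pm(x,y),\qquad s^\pm(u',v')=s^\pm(u,v),\qquad F_2(x',y';u',v')\ge F_d(x,y;u,v). \]
   Context: For $x,y\in\mathbb{R}^d_{>0}$ define $s^+(x,y)=\max_i \frac{y_i}{x_i}$ and $s^-(x,y)=\min_i\frac{y_i}{x_i}$. Define $F_d:(\mathbb{R}^d_{>0})^4\to\mathbb{R}_{>0}$ by $F_d(x,y;u,v)=\frac{(x\cdot u)(y\cdot v)}{(x\cdot v)(y\cdot u)}$, where $\cdot$ is the standard Euclidean dot product; $F_2$ is the case $d=2$. *)

(* Defs.v *)
From mathcomp Require Import all_boot all_order all_algebra.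
Set Implicit Arguments. Unset Strict Implicit. Unset Printing Implicit Defensive.
Import Order.TTheory GRing.Theory Num.Theory.
Local Open Scope ring_scope.

(* Vectors in R^n are functions 'I_n -> R. Dimension n.+1 ensures the index
   set is nonempty, so max/min are well defined (seeded by index 0). *)

Definition pos_vec (R : realFieldType) (n : nat) (x : 'I_n -> R) : Prop :=
  forall i, 0 < x i.

Definition dotv (R : realFieldType) (n : nat) (x y : 'I_n -> R) : R :=
  \sum_(i < n) x i * y i.

Definition splus (R : realFieldType) (n : nat) (x y : 'I_n.+1 -> R) : R :=
  \big[Num.max/(y ord0 / x ord0)]_(i < n.+1) (y i / x i).

Definition sminus (R : realFieldType) (n : nat) (x y : 'I_n.+1 -> R) : R :=
  \big[Num.min/(y ord0 / x ord0)]_(i < n.+1) (y i / x i).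

Definition Fd (R : realFieldType) (n : nat) (x y u v : 'I_n -> R) : R :=
  (dotv x u * dotv y v) / (dotv x v * dotv y u).

(* Main.v *)
Require Import Defs.
From mathcomp Require Import all_boot all_order all_algebra.
From mathcomp Require Import reals ring lra.
Import Order.TTheory GRing.Theory Num.Theory.
Set Implicit Arguments. Unset Strict Implicit.
Local Open Scope ring_scope.

Lemma bnd_min (R : realFieldType) n (x y : 'I_n.+1 -> R) i : pos_vec x ->
  sminus x y * x i <= y i.
Proof.
move=> px; rewrite -ler_pdivlMr //; exact: bigmin_le.
Qed.
Lemma bnd_max (R : realFieldType) n (x y : 'I_n.+1 -> R) i : pos_vec x ->
  y i <= splus x y * x i.
Proof.
move=> px; rewrite -ler_pdivrMr //; exact: le_bigmax.
Qed.
Lemma pos_min (R : realFieldType) n (x y : 'I_n.+1 -> R) : pos_vec x -> pos_vec y ->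
  0 < sminus x y.
Proof.
move=> px py; rewrite /sminus; apply: (big_ind (fun t => 0 < t)).
- exact: divr_gt0.
- by move=> a b a0 b0; rewrite lt_min a0 b0.
- by move=> i _; exact: divr_gt0.
Qed.
Lemma min_le_max (R : realFieldType) n (x y : 'I_n.+1 -> R) : pos_vec x ->
  sminus x y <= splus x y.
Proof.
move=> px; apply: (@le_trans _ _ (y ord0 / x ord0)); [exact: bigmin_le | exact: le_bigmax].
Qed.

Lemma two_max (R : realFieldType) (p q a b : R) : 0 < p -> 0 < q -> b <= a ->
  splus (fun i : 'I_2 => if val i == 0%N then p else q)
        (fun i : 'I_2 => if val i == 0%N then p * a else q * b) = a /\
  sminus (fun i : 'I_2 => if val i == 0%N then p else q)
        (fun i : 'I_2 => if val i == 0%N then p * a else q * b) = b.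
Proof.
move=> p0 q0 ba; rewrite /splus /sminus !big_ord_recl !big_ord0 /=.
have e1 : p * a / p = a by rewrite mulrAC divff ?gt_eqF // mul1r.
have e2 : q * b / q = b by rewrite mulrAC divff ?gt_eqF // mul1r.
rewrite e1 e2 (max_r ba) maxxx (min_l ba) (min_r ba); split => //.
Qed.
Lemma key_case (R : realFieldType) (X Y V Z m1 M1 m2 M2 : R) :
  0 < X -> 0 < Y -> 0 < V -> 0 < Z -> 0 < m1 -> 0 < m2 -> m1 <= M1 -> m2 <= M2 ->
  m1 * X <= Y -> Y <= M1 * X -> m2 * X <= V -> V <= M2 * X ->
  Z - m2 * Y - m1 * V + m1 * m2 * X <= (M2 - m2) * (Y - m1 * X) ->
  Z - m2 * Y - m1 * V + m1 * m2 * X <= (M1 - m1) * (V - m2 * X) ->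
  V * Y < X * Z ->
  (M2 - m2) * (Y - m1 * X) <= (M1 - m1) * (V - m2 * X) ->
  exists p q : R, 0 < p /\ 0 < q /\
   X * Z / (V * Y) <= (p + q) * (p * M1 * M2 + q * m1 * m2) / ((p * M2 + q * m2) * (p * M1 + q * m1)).
Proof.
move=> X0 Y0 V0 Z0 m10 m20 mM1 mM2 Y1 Y2 V1 V2 I1 I2 F1 C.
have pp : 0 < Y - m1 * X.
  rewrite subr_gt0 lt_neqAle Y1 andbT; apply/negP => /eqP E.
  have e1 : (M2 - m2) * (Y - m1 * X) = 0 by rewrite E subrr mulr0.
  have e2 : m2 * Y = m1 * m2 * X by rewrite -E; ring.
  have H : Z <= m1 * V by lra.
  have : X * Z <= X * (m1 * V) by rewrite ler_pM2l.
  have e3 : X * (m1 * V) = V * Y by rewrite -E; ring.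
  lra.
have qp : 0 < M1 * X - Y.
  rewrite subr_gt0 lt_neqAle Y2 andbT; apply/negP => /eqP E.
  have e1 : (M1 - m1) * (V - m2 * X) = M1 * V - m1 * V - m2 * Y + m1 * m2 * X by rewrite E; ring.
  have H : Z <= M1 * V by lra.
  have : X * Z <= X * (M1 * V) by rewrite ler_pM2l.
  have e3 : X * (M1 * V) = V * Y by rewrite E; ring.
  lra.
exists (Y - m1 * X), (M1 * X - Y); split => //; split => //.
have [p ep] : {p | p = Y - m1 * X} by eexists.
have [q eq] : {q | q = M1 * X - Y} by eexists.
rewrite -ep -eq; rewrite -ep in pp; rewrite -eq in qp.
have [D eD] : {D | D = p * M2 + q * m2} by eexists.
rewrite -eD.
have D0 : 0 < D.
  have h1 := mulr_gt0 pp (lt_le_trans m20 mM2); have h2 := mulr_gt0 qp m20; rewrite eD; lra.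
have E1 : p * M1 + q * m1 = (M1 - m1) * Y by rewrite ep eq; ring.
have E2 : p + q = (M1 - m1) * X by rewrite ep eq; ring.
have Dm : 0 < M1 - m1 by move: pp qp; rewrite ep eq; nra.
rewrite E1 E2.
have [N eN] : {N | N = p * M1 * M2 + q * m1 * m2} by eexists.
rewrite -eN.
have key : Z * D <= N * V.
  have Zb : Z <= M2 * Y + m1 * V - M2 * m1 * X by lra.
  have h1 : Z * D <= (M2 * Y + m1 * V - M2 * m1 * X) * D by rewrite ler_pM2r.
  have hD : D <= (M1 - m1) * V by rewrite eD ep eq; lra.
  have h2 : 0 <= M2 * p * ((M1 - m1) * V - D).
    apply: mulr_ge0; [apply: mulr_ge0; [lra| exact: ltW] | lra].
  have e : N * V - (M2 * Y + m1 * V - M2 * m1 * X) * D = M2 * p * ((M1 - m1) * V - D).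
    by rewrite eN eD ep eq; ring.
  lra.
have -> : (M1 - m1) * X * N / (D * ((M1 - m1) * Y)) = (X * N) / (D * Y).
  field; rewrite ?mulf_neq0 ?gt_eqF //.
rewrite ler_pdivrMr ?mulr_gt0 //.
have -> : X * N / (D * Y) * (V * Y) = (X * N * V) / D by field; rewrite ?gt_eqF.
rewrite ler_pdivlMr //.
have : X * (Z * D) <= X * (N * V) by rewrite ler_pM2l.
lra.
Qed.

Lemma key (R : realFieldType) (X Y V Z m1 M1 m2 M2 : R) :
  0 < X -> 0 < Y -> 0 < V -> 0 < Z -> 0 < m1 -> 0 < m2 -> m1 <= M1 -> m2 <= M2 ->
  m1 * X <= Y -> Y <= M1 * X -> m2 * X <= V -> V <= M2 * X ->
  Z - m2 * Y - m1 * V + m1 * m2 * X <= (M2 - m2) * (Y - m1 * X) ->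
  Z - m2 * Y - m1 * V + m1 * m2 * X <= (M1 - m1) * (V - m2 * X) ->
  exists p q : R, 0 < p /\ 0 < q /\
   X * Z / (V * Y) <= (p + q) * (p * M1 * M2 + q * m1 * m2) / ((p * M2 + q * m2) * (p * M1 + q * m1)).
Proof.
move=> X0 Y0 V0 Z0 m10 m20 mM1 mM2 Y1 Y2 V1 V2 I1 I2.
have [F1|F1] := leP (X * Z) (V * Y).
  exists 1, 1; split; first exact: ltr01. split; first exact: ltr01.
  have a : X * Z / (V * Y) <= 1 by rewrite ler_pdivrMr ?mulr_gt0 // mul1r.
  apply: (le_trans a).
  have d1 : 0 < 1 * M2 + 1 * m2 by rewrite !mul1r; lra.
  have d2 : 0 < 1 * M1 + 1 * m1 by rewrite !mul1r; lra.
  rewrite ler_pdivlMr ?mulr_gt0 // mul1r.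
  have : 0 <= (M1 - m1) * (M2 - m2) by apply: mulr_ge0; lra.
  have e : (1 + 1) * (1 * M1 * M2 + 1 * m1 * m2) - (1 * M2 + 1 * m2) * (1 * M1 + 1 * m1) = (M1 - m1) * (M2 - m2) by ring.
  lra.
have [C|C] := leP ((M2 - m2) * (Y - m1 * X)) ((M1 - m1) * (V - m2 * X)).
  exact: key_case.
have [p [q [p0 [q0 H]]]] : exists p q : R, 0 < p /\ 0 < q /\
   X * Z / (Y * V) <= (p + q) * (p * M2 * M1 + q * m2 * m1) / ((p * M1 + q * m1) * (p * M2 + q * m2)).
  apply: key_case => //; try lra.
exists p, q; split => //; split => //.
by rewrite [V * Y]mulrC [_ * M1 * M2]mulrAC [q * m1 * m2]mulrAC [X in _ <= _ / X]mulrC.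
Qed.

Lemma sum_ident (R : realFieldType) n (x y u v : 'I_n -> R) (m1 m2 : R) :
  \sum_(i < n) (y i - m1 * x i) * (v i - m2 * u i) =
  dotv y v - m2 * dotv y u - m1 * dotv x v + m1 * m2 * dotv x u.
Proof.
rewrite /dotv (eq_bigr (fun i => y i * v i - m2 * (y i * u i) - m1 * (x i * v i)
   + m1 * m2 * (x i * u i))); last by move=> i _; ring.
by rewrite !big_split /= !sumrN -!mulr_sumr.
Qed.

Lemma sum_ident2 (R : realFieldType) n (x y u : 'I_n -> R) (m1 : R) :
  \sum_(i < n) (y i - m1 * x i) * u i = dotv y u - m1 * dotv x u.
Proof.
rewrite /dotv (eq_bigr (fun i => y i * u i - m1 * (x i * u i))); last by move=> i _; ring.
by rewrite !big_split /= !sumrN -!mulr_sumr.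
Qed.

Lemma dot_pos (R : realFieldType) n (x y : 'I_n.+1 -> R) : pos_vec x -> pos_vec y -> 0 < dotv x y.
Proof.
move=> px py; rewrite /dotv big_ord_recl; apply: ltr_pwDl; last first.
  by apply: sumr_ge0 => i _; apply: mulr_ge0; apply: ltW.
exact: mulr_gt0.
Qed.

Lemma dotvC (R : realFieldType) n (x y : 'I_n -> R) : dotv x y = dotv y x.
Proof. by apply: eq_bigr => i _; rewrite mulrC. Qed.

Theorem mainTheorem8 (R : realType) (n : nat)
  (x y u v : 'I_n.+2 -> R) :
  pos_vec x -> pos_vec y -> pos_vec u -> pos_vec v ->
  exists x' y' u' v' : 'I_2 -> R,
    (pos_vec x' /\ pos_vec y' /\ pos_vec u' /\ pos_vec v') /\
    [/\ splus x' y' = splus x y /\ sminus x' y' = sminus x y,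
        splus u' v' = splus u v /\ sminus u' v' = sminus u v &
        Fd x y u v <= Fd x' y' u' v'].
Proof.
move=> px py pu pv.
have hm1 := pos_min px py; have hm2 := pos_min pu pv.
have hmM1 := min_le_max y px; have hmM2 := min_le_max v pu.
have X0 := dot_pos px pu; have Y0 := dot_pos py pu.
have V0 := dot_pos px pv; have Z0 := dot_pos py pv.
have Y1 : sminus x y * dotv x u <= dotv y u.
  rewrite -subr_ge0 -sum_ident2; apply: sumr_ge0 => i _; apply: mulr_ge0; last exact: ltW.
  by rewrite subr_ge0 bnd_min.
have Y2 : dotv y u <= splus x y * dotv x u.
  rewrite -subr_le0 -sum_ident2 -oppr_ge0 -sumrN; apply: sumr_ge0 => i _.
  rewrite -mulNr; apply: mulr_ge0; last exact: ltW.
  by rewrite oppr_ge0 subr_le0 bnd_max.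
have V1 : sminus u v * dotv x u <= dotv x v.
  rewrite [dotv x u]dotvC [dotv x v]dotvC.
  rewrite -subr_ge0 -sum_ident2; apply: sumr_ge0 => i _; apply: mulr_ge0; last exact: ltW.
  by rewrite subr_ge0 bnd_min.
have V2 : dotv x v <= splus u v * dotv x u.
  rewrite [dotv x u]dotvC [dotv x v]dotvC.
  rewrite -subr_le0 -sum_ident2 -oppr_ge0 -sumrN; apply: sumr_ge0 => i _.
  rewrite -mulNr; apply: mulr_ge0; last exact: ltW.
  by rewrite oppr_ge0 subr_le0 bnd_max.
have I1 : dotv y v - sminus u v * dotv y u - sminus x y * dotv x v
    + sminus x y * sminus u v * dotv x u
    <= (splus u v - sminus u v) * (dotv y u - sminus x y * dotv x u).
  rewrite -sum_ident -sum_ident2 mulr_sumr; apply: ler_sum => i _.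
  rewrite mulrCA; apply: ler_wpM2l; first by rewrite subr_ge0 bnd_min.
  by rewrite mulrBl lerD2r bnd_max.
have I2 : dotv y v - sminus u v * dotv y u - sminus x y * dotv x v
    + sminus x y * sminus u v * dotv x u
    <= (splus x y - sminus x y) * (dotv x v - sminus u v * dotv x u).
  rewrite -sum_ident [dotv x v]dotvC [dotv x u]dotvC -sum_ident2 mulr_sumr; apply: ler_sum => i _.
  rewrite [X in X <= _]mulrC mulrCA; apply: ler_wpM2l; first by rewrite subr_ge0 bnd_min.
  by rewrite mulrBl lerD2r bnd_max.
have [p [q [p0 [q0 H]]]] := key X0 Y0 V0 Z0 hm1 hm2 hmM1 hmM2 Y1 Y2 V1 V2 I1 I2.
pose M1 := splus x y; pose m1 := sminus x y; pose M2 := splus u v; pose m2 := sminus u v.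
exists (fun i : 'I_2 => if val i == 0%N then p else q).
exists (fun i : 'I_2 => if val i == 0%N then p * M1 else q * m1).
exists (fun i : 'I_2 => if val i == 0%N then 1 else 1).
exists (fun i : 'I_2 => if val i == 0%N then 1 * M2 else 1 * m2).
have M10 : 0 < M1 by exact: lt_le_trans hm1 hmM1.
have M20 : 0 < M2 by exact: lt_le_trans hm2 hmM2.
split.
  split; first by move=> i; case: ifP.
  split; first by move=> i; case: ifP => _; apply: mulr_gt0.
  split; first by move=> i; case: ifP => _; exact: ltr01.
  by move=> i; case: ifP => _; rewrite mul1r.
split.
- exact: two_max.
- exact: two_max ltr01 ltr01 hmM2.
- rewrite /Fd; apply: (le_trans H); rewrite le_eqVlt; apply/orP; left; apply/eqP.
  rewrite /dotv !big_ord_recl !big_ord0 /=.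
  rewrite !mulr1 !mul1r !addr0 /M1 /m1 /M2 /m2.
  by congr (_ * _^-1); ring.
Qed.
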